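(* Let $e,n\geq 1$. A basis of $H^\bullet(\Gamma(e,e,n);\mathbb{Q})$ is naturally indexed by the orbits, under the action of $W=G(e,e,n)$, of the set of invariant $e$-multigraphs on $n$ vertices: for each such orbit with representative $\Delta$, the class $\sum_{w\in W}w(\omega_\Delta)$ is nonzero, and these classes form a basis, the class of $\Delta$ having degree equal to the number of edges of $\Delta$.
   Context: For a finite complex reflection group $W$ with hyperplane set $\mathcal A$, $P=\pi_1(\mathbb{C}^\ell\setminus\bigcup\mathcal A)$, $B=\pi_1((\mathbb{C}^\ell\setminus\bigcup\mathcal A)/W)$, $\Gamma=B/[P,P]$; then $H^\bullet(\Gamma;\mathbb{Q})\cong\Lambda^\bullet(\mathbb{Q}\mathcal A)^W$, where $H^1$ of $P^{ab}\cong\mathbb{Z}\mathcal A$ has basis the forms $d\log$ of the hyperplanes' linear forms and $W$ acts by permuting them. $G(e,e,n)$ is the group of $n\times n$ monomial matrices with nonzero entries in $\mu_e$ (the $e$-th roots of unity) whose product is $1$; $\Gamma(e,e,n)$ is $\Gamma$ for this group; its hyperplanes are $z_i=\zeta z_j$, $i<j$, $\zeta\in\mu_e$. $K_n(e)$ is the complete $e$-multigraph on $\{1,\dots,n\}$ with $e$ edges between each pair $i<j$, labelled by $\zeta\in\mu_e$; an $e$-multigraph on $n$ vertices is a subgraph (subset of edges) of $K_n(e)$. The edge $(i,j,\zeta)$ corresponds to the 1-form $\omega^{\zeta}_{i,j}=d\log(z_i-\zeta z_j)$, and a multigraph $\Delta$ to the wedge product $\omega_\Delta$ of its edges' forms ordered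 lexicographically in $(i,j,\zeta)$ (for a fixed order of $\mu_e$). $W$ acts on multigraphs through its action on hyperplanes. $\mathrm{Stab}_W(\Delta)$ is the subgroup of $W$ preserving $\Delta$; $\Delta$ is invariant if every element of $\mathrm{Stab}_W(\Delta)$ induces an even permutation of the edges of $\Delta$. *)

(* Defs.v *)
From mathcomp Require Import all_boot all_order all_fingroup all_algebra.
Set Implicit Arguments. Unset Strict Implicit. Unset Printing Implicit Defensive.
Import GRing.Theory.
Local Open Scope ring_scope.

(* Hyperplanes of G(e,e,n) = edges of K_n(e).                           *)
(* The edge (i,j,k) with i < j, k : 'I_e stands for the hyperplane       *)
(* z_i = zeta^k z_j, zeta = exp(2 pi i / e); it corresponds to the form  *)
(* omega^{zeta^k}_{i,j}.                                                *)
Definition edge_pred (n e : nat) (x : 'I_n * 'I_n * 'I_e) : bool :=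
  (x.1.1 < x.1.2)%N.
Definition edge (n e : nat) := {x : 'I_n * 'I_n * 'I_e | edge_pred x}.

(* Elements of G(e,e,n): pairs (s, a) standing for the monomial matrix  *)
(* sending the basis vector e_i to zeta^(a i) e_(s i); it lies in         *)
(* G(e,e,n) iff the product of its nonzero entries, zeta^(sum a), is 1.  *)
Definition welt (n e : nat) := ({perm 'I_n} * {ffun 'I_n -> 'I_e})%type.
Definition Wee (n e : nat) : {set welt n e} :=
  [set w : welt n e | ((\sum_i (w.2 i : nat)) %% e == 0)%N].

Lemma ord_gt0 (e : nat) (x : 'I_e) : (0 < e)%N.
Proof. exact: leq_ltn_trans (leq0n x) (ltn_ord x). Qed.

(* reduction mod e into 'I_e (e > 0 witnessed by an element of 'I_e) *)
Definition zmodI (e : nat) (x : 'I_e) (k : nat) : 'I_e :=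
  Ordinal (ltn_pmod k (ord_gt0 x)).

Lemma perm_lt_swap (n : nat) (s : {perm 'I_n}) (i j : 'I_n) :
  (i < j)%N -> ~~ (s i < s j)%N -> (s j < s i)%N.
Proof.
move=> hij hs; rewrite ltn_neqAle leqNgt hs andbT.
apply/negP=> /eqP/val_inj/perm_inj eji.
by move: hij; rewrite eji ltnn.
Qed.

(* Action of w = (s,a) on hyperplanes:  w maps {z_i = zeta^c z_j} to     *)
(* {y_(s i) = zeta^(c + a i - a j) y_(s j)}, rewritten with the smaller  *)
(* index first.                                                         *)
Definition act_edge (n e : nat) (w : welt n e) (x : edge n e) : edge n e :=
  let i := (val x).1.1 in let j := (val x).1.2 in let c := (val x).2 in
  let s := w.1 in let a := w.2 in
  match boolP (s i < s j)%N with
  | AltTrue h => @exist _ (@edge_pred n e) (s i, s j,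
                   zmodI c (c + a i + (e - a j))%N) h
  | AltFalse h => @exist _ (@edge_pred n e) (s j, s i,
                   zmodI c (a j + (e - a i) + (e - c))%N)
                   (perm_lt_swap (valP x) h)
  end.

Definition edge_lt (n e : nat) (x y : edge n e) : bool :=
  let: (i, j, k) := val x in let: (i', j', k') := val y in
  [|| (i < i')%N, (i == i' :> nat) && (j < j')%N
    | [&& (i == i' :> nat), (j == j' :> nat) & (k < k')%N]].
Definition edge_le (n e : nat) (x y : edge n e) : bool :=
  (x == y) || edge_lt x y.

Definition sorted_edges (n e : nat) (D : {set edge n e}) : seq (edge n e) :=
  sort (@edge_le n e) (enum D).

Fixpoint inversions (n e : nat) (s : seq (edge n e)) : nat :=
  match s with
  | [::] => 0
  | x :: s' => (count (fun y => edge_lt y x) s' + inversions s')%N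
  end.

(* The exterior algebra Lambda(Q A), with its standard basis e_S indexed *)
(* by the subsets S of A (e_S = wedge of the edges of S in lex order).   *)
Definition Lam (n e : nat) := {ffun {set edge n e} -> rat^o}.

Definition ebasis (n e : nat) (S : {set edge n e}) : Lam n e :=
  [ffun T => (T == S)%:R].

(* wedge product of the sequence of generators x_1 ^ ... ^ x_k *)
Definition wedge_seq (n e : nat) (s : seq (edge n e)) : Lam n e :=
  if uniq s then (-1) ^+ inversions s *: ebasis [set x in s] else 0.

Definition omega (n e : nat) (D : {set edge n e}) : Lam n e :=
  wedge_seq (sorted_edges D).

Definition actL (n e : nat) (w : welt n e) (v : Lam n e) : Lam n e :=
  \sum_(S : {set edge n e})
     v S *: wedge_seq (map (act_edge w) (sorted_edges S)).

Definition homog (n e : nat) (k : nat) (v : Lam n e) : Prop :=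
  forall S : {set edge n e}, #|S| <> k -> v S = 0.

Definition cls (n e : nat) (D : {set edge n e}) : Lam n e :=
  \sum_(w in Wee n e) actL w (omega D).

Definition mg_stab (n e : nat) (D : {set edge n e}) : {set welt n e} :=
  [set w in Wee n e | act_edge w @: D == D].

(* parity of the permutation of the edges of D induced by w (w in the
   stabiliser of D): inversion count of (w d_1, ..., w d_k), d_1<...<d_k *)
Definition mg_invariant (n e : nat) (D : {set edge n e}) : bool :=
  [forall w in mg_stab D,
     ~~ odd (inversions (map (act_edge w) (sorted_edges D)))].

Definition same_orbit (n e : nat) (D D' : {set edge n e}) : bool :=
  [exists w in Wee n e, act_edge w @: D == D'].

(* Main.v *)
Require Import Defs.
From mathcomp Require Import all_boot all_order all_fingroup all_algebra.
From mathcomp Require Import zify ring lra.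
Import GRing.Theory.
Set Implicit Arguments. Unset Strict Implicit. Unset Printing Implicit Defensive.
Local Open Scope ring_scope.

Section Order.
Variables n e : nat.
Implicit Types x y z : edge n e.

Lemma edge_ltE x y : edge_lt x y =
  [|| ((val x).1.1 < (val y).1.1)%N,
      ((val x).1.1 == (val y).1.1 :> nat) && ((val x).1.2 < (val y).1.2)%N
    | [&& ((val x).1.1 == (val y).1.1 :> nat), ((val x).1.2 == (val y).1.2 :> nat)
         & ((val x).2 < (val y).2)%N]].
Proof. by case: x => [[[i j] k] h]; case: y => [[[i' j'] k'] h']. Qed.

Lemma edge_eqE x y : (x == y) =
  [&& ((val x).1.1 == (val y).1.1 :> nat), ((val x).1.2 == (val y).1.2 :> nat)
         & ((val x).2 == (val y).2 :> nat)].
Proof.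
case: x => [[[i j] k] h]; case: y => [[[i' j'] k'] h'] /=.
apply/eqP/and3P => [[-> -> ->]|[/eqP/val_inj a /eqP/val_inj b /eqP/val_inj c]].
  by [].
by apply: val_inj => /=; rewrite a b c.
Qed.

Lemma edge_lt_irr x : edge_lt x x = false.
Proof. rewrite edge_ltE; lia. Qed.

Lemma edge_lt_asym x y : edge_lt x y -> ~~ edge_lt y x.
Proof. rewrite !edge_ltE; lia. Qed.

Lemma edge_lt_total x y : x != y -> edge_lt x y || edge_lt y x.
Proof. rewrite !edge_ltE edge_eqE; lia. Qed.

Lemma edge_lt_trans : transitive (@edge_lt n e).
Proof. move=> y x z; rewrite !edge_ltE; lia. Qed.

Lemma edge_le_trans : transitive (@edge_le n e).
Proof.
move=> y x z; rewrite /edge_le => /orP[/eqP->//|h1] /orP[/eqP<-|h2].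
  by rewrite h1 orbT.
by rewrite (@edge_lt_trans y x z h1 h2) orbT.
Qed.

Lemma edge_le_total : total (@edge_le n e).
Proof.
move=> x y; rewrite /edge_le; case: (eqVneq x y) => [->|h] //=.
by apply: edge_lt_total.
Qed.

End Order.
Fixpoint inv_r {T : Type} (r : rel T) (s : seq T) : nat :=
  if s is x :: s' then (count (fun y => r y x) s' + inv_r r s')%N else 0%N.

Lemma inv_r_map (T U : Type) (r : rel U) (f : T -> U) s :
  inv_r r (map f s) = inv_r (fun y x => r (f y) (f x)) s.
Proof. by elim: s => //= x s ->; rewrite count_map. Qed.

Lemma count_xor (T : Type) (p q : pred T) s :
  (count p s + count q s = count (fun y => p y (+) q y) s
     + 2 * count (fun y => p y && q y) s)%N.
Proof. elim: s => //= y s IH; case: (p y); case: (q y) => /=; lia. Qed.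

Lemma inv_r_xor (T : Type) (r1 r2 : rel T) s :
  (inv_r r1 s + inv_r r2 s = inv_r (fun y x => r1 y x (+) r2 y x) s
     + 2 * inv_r (fun y x => r1 y x && r2 y x) s)%N.
Proof.
elim: s => //= x s IH.
have := count_xor (fun y => r1 y x) (fun y => r2 y x) s; lia.
Qed.

Lemma sum_bool_count (T : Type) (p : pred T) s :
  (\sum_(z <- s) (p z : nat))%N = count p s.
Proof. by elim: s => [|z s IH]; rewrite ?big_nil ?big_cons ?IH. Qed.

Lemma inv_r_sym (T : eqType) (q : rel T) s :
  (forall x y, x != y -> q x y = q y x) -> uniq s ->
  (inv_r q s).*2 = (\sum_(x <- s) count (fun y => (y != x) && q y x) s)%N.
Proof.
move=> qs; elim: s => [|x s IH]; first by rewrite big_nil.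
rewrite /= => /andP[xs us]; rewrite big_cons /= eqxx /=.
have e1 : count (fun y => (y != x) && q y x) s = count (fun y => q y x) s.
  apply: eq_in_count => y ys /=; have -> // : y != x.
  by apply: contraNneq xs => <-.
have e2 : (\sum_(z <- s) count (fun y => (y != z) && q y z) (x :: s) =
           count (fun y => q y x) s +
           \sum_(z <- s) count (fun y => (y != z) && q y z) s)%N.
  rewrite /= big_split /= -sum_bool_count; congr (_ + _)%N.
  apply: eq_big_seq => z zs; have xz : x != z by apply: contraNneq xs => ->.
  by rewrite xz /= qs.
by rewrite e2 e1 -IH // doubleD -!addnn; lia.
Qed.

Lemma inv_r_perm (T : eqType) (q : rel T) s t :
  (forall x y, x != y -> q x y = q y x) -> uniq s -> perm_eq s t ->
  inv_r q s = inv_r q t.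
Proof.
move=> qs us pst; have ut : uniq t by rewrite -(perm_uniq pst).
apply: double_inj; rewrite !inv_r_sym //.
rewrite (perm_big _ pst) /=; apply: eq_bigr => x _.
by move/seq.permP: pst => ->.
Qed.

Lemma invE (n e : nat) (s : seq (edge n e)) : inversions s = inv_r (@edge_lt n e) s.
Proof. by elim: s => //= x s ->. Qed.

Lemma edge_lt_neg (n e : nat) (x y : edge n e) : x != y -> edge_lt y x = ~~ edge_lt x y.
Proof.
move=> h; have := edge_lt_total h; have := @edge_lt_asym n e x y.
by case: (edge_lt x y); case: (edge_lt y x) => // /(_ isT).
Qed.

Lemma inv_sorted (n e : nat) (s : seq (edge n e)) :
  sorted (@edge_le n e) s -> uniq s -> inversions s = 0%N.
Proof.
elim: s => //= x s IH hp /andP[xs us].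
rewrite IH ?(path_sorted hp) // addn0.
apply/eqP; rewrite -leqn0 leqNgt -has_count; apply/hasP => [[y ys hy]].
have := allP (order_path_min (@edge_le_trans n e) hp) y ys.
rewrite /edge_le; case: eqP => [xy|_ /= hxy].
  by move: xs; rewrite xy ys.
by move: (edge_lt_asym hxy); rewrite hy.
Qed.

Lemma inv_parity (n e : nat) (f : edge n e -> edge n e) (finj : injective f)
  (t u : seq (edge n e)) : uniq t -> perm_eq t u -> inversions u = 0%N ->
  odd (inversions (map f t)) = odd (inversions t) (+) odd (inversions (map f u)).
Proof.
move=> ut ptu u0; rewrite !invE !inv_r_map in u0 *.
set r1 := @edge_lt n e; set r2 := fun y x => edge_lt (f y) (f x).
set q := fun y x => r1 y x (+) r2 y x.
have Hx s : odd (inv_r r1 s) (+) odd (inv_r r2 s) = odd (inv_r q s).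
  by rewrite -oddD inv_r_xor oddD mul2n odd_double addbF.
have qs : forall x y, x != y -> q x y = q y x.
  move=> x y xy; rewrite /q /r1 /r2 (edge_lt_neg xy).
  have fxy : f x != f y by apply: contra xy => /eqP/finj ->.
  by rewrite (edge_lt_neg fxy) addNb addbN negbK.
rewrite -[odd (inv_r r2 u)]/(false (+) odd (inv_r r2 u)) -[false]/(odd 0).
rewrite -u0 Hx -(inv_r_perm qs ut ptu) -Hx addbA addbb.
by [].
Qed.

Section Group.
Variables n e : nat.
Local Notation welt := (welt n e).
Implicit Types w : welt.

Definition wmul w1 w2 : welt :=
  ((w2.1 * w1.1)%g, [ffun i => zmodI (w2.2 i) (w2.2 i + w1.2 (w2.1 i))%N]).

Definition winv w : welt :=
  ((w.1)^-1%g, [ffun i => zmodI (w.2 i) (e - w.2 ((w.1)^-1%g i))%N]).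

Lemma act_edgeE w (x : edge n e) : val (act_edge w x) =
  if (w.1 (val x).1.1 < w.1 (val x).1.2)%N then
    (w.1 (val x).1.1, w.1 (val x).1.2,
     zmodI (val x).2 ((val x).2 + w.2 (val x).1.1 + (e - w.2 (val x).1.2))%N)
  else (w.1 (val x).1.2, w.1 (val x).1.1,
     zmodI (val x).2 (w.2 (val x).1.2 + (e - w.2 (val x).1.1) + (e - (val x).2))%N).
Proof. by rewrite /act_edge; case: {-}_ / boolP => h /=; rewrite ?h ?(negbTE h). Qed.

Lemma ord_le1 (x y : 'I_e) : (e <= 1)%N -> x = y.
Proof. move=> h; apply: ord_inj; have := ltn_ord x; have := ltn_ord y; lia. Qed.

Lemma zmod_eq (c c' : 'I_e) k k' :
  ((1 < e)%N -> (k%:R : 'Z_e) = k'%:R) -> zmodI c k = zmodI c' k'.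
Proof.
case: (ltnP 1 e) => he H; last exact: ord_le1.
by apply: val_inj => /=; rewrite -!(val_Zp_nat he) H.
Qed.

Lemma zmod_eqn (he0 : (0 < e)%N) k k' :
  ((1 < e)%N -> (k%:R : 'Z_e) = k'%:R) -> (k %% e = k' %% e)%N.
Proof.
case: (ltnP 1 e) => he H; first by rewrite -!(val_Zp_nat he) H.
have -> : e = 1%N by lia.
by rewrite !modn1.
Qed.

Lemma modR (he : (1 < e)%N) k : (((k %% e)%N)%:R : 'Z_e) = k%:R.
Proof. by apply: ord_inj; rewrite !(val_Zp_nat he) modn_mod. Qed.

Lemma zmodR (he : (1 < e)%N) (c : 'I_e) k : ((zmodI c k : nat)%:R : 'Z_e) = k%:R.
Proof. exact: modR. Qed.

Lemma subR (he : (1 < e)%N) a : (a <= e)%N -> (((e - a)%N)%:R : 'Z_e) = - a%:R.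
Proof.
move=> ae; rewrite natrB //.
have -> : (e%:R : 'Z_e) = 0 by apply: ord_inj; rewrite (val_Zp_nat he) modnn.
by rewrite sub0r.
Qed.

Lemma subRo (he : (1 < e)%N) (a : 'I_e) : (((e - a)%N)%:R : 'Z_e) = - (a : nat)%:R.
Proof. by apply: subR => //; apply: ltnW. Qed.

Lemma subRm (he : (1 < e)%N) k : (((e - k %% e)%N)%:R : 'Z_e) = - k%:R.
Proof. by rewrite subR ?modR // ltnW // ltn_pmod // ltnW. Qed.

Lemma perm_lt_neg (s : {perm 'I_n}) (i j : 'I_n) :
  i != j -> (s j < s i)%N = ~~ (s i < s j)%N.
Proof.
move=> ij; have : s i != s j by rewrite (inj_eq perm_inj).
move=> /eqP sij; apply/idP/idP; first by move=> h; rewrite -leqNgt ltnW.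
rewrite -leqNgt leq_eqVlt => /orP[/eqP/val_inj h|//].
by case: sij.
Qed.

Lemma act_edgeM w1 w2 (x : edge n e) :
  act_edge (wmul w1 w2) x = act_edge w1 (act_edge w2 x).
Proof.
apply: val_inj; rewrite !act_edgeE.
case: x => [[[i j] c]]; rewrite /edge_pred /= => hij.
have ij : i != j by apply: contraTneq hij => ->; rewrite ltnn.
rewrite !permM !ffunE.
case h2: (w2.1 i < w2.1 j)%N => /=.
  case h1: (w1.1 (w2.1 i) < w1.1 (w2.1 j))%N => /=;
  by congr (_, _); apply: val_inj => /=; apply: (zmod_eqn (ord_gt0 c)) => he;
     rewrite !(natrD, subRm he, subRo he, modR he, zmodR he); ring.
have ij2 : w2.1 i != w2.1 j by rewrite (inj_eq perm_inj).
rewrite (perm_lt_neg w1.1 ij2).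
case h1: (w1.1 (w2.1 i) < w1.1 (w2.1 j))%N => /=;
by congr (_, _); apply: val_inj => /=; apply: (zmod_eqn (ord_gt0 c)) => he;
   rewrite !(natrD, subRm he, subRo he, modR he, zmodR he); ring.
Qed.

Lemma act_edge_id (u : welt) (x : edge n e) :
  u.1 = 1%g -> (forall i, u.2 i = 0%N :> nat) -> act_edge u x = x.
Proof.
move=> h1 h2; apply: val_inj; rewrite act_edgeE h1 !perm1 !h2.
case: x => [[[i j] c]]; rewrite /edge_pred /= => ->.
congr (_, _); apply: val_inj => /=.
by rewrite addn0 subn0 modnDr modn_small.
Qed.

Lemma act_edge_inj w : injective (act_edge w).
Proof.
have h1 : (wmul (winv w) w).1 = 1%g by rewrite /= mulgV.
have h2 i : (wmul (winv w) w).2 i = 0%N :> nat.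
  rewrite /= !ffunE /= permK modnDmr subnKC ?modnn //.
  exact: ltnW.
move=> x y hxy.
by rewrite -(act_edge_id x h1 h2) -(act_edge_id y h1 h2) !act_edgeM hxy.
Qed.

Lemma sum_le1 (a : {ffun 'I_n -> 'I_e}) : (e <= 1)%N ->
  ((\sum_i (a i : nat)) %% e == 0)%N.
Proof.
move=> h; rewrite big1 ?mod0n // => i _.
by have := ltn_ord (a i); lia.
Qed.

Lemma modZ0 (he : (1 < e)%N) k : (k %% e == 0)%N = ((k%:R : 'Z_e) == 0).
Proof.
rewrite -(val_Zp_nat he); apply/eqP/eqP => h; last by rewrite h.
by apply: ord_inj; rewrite h.
Qed.

Lemma Wee_mul w1 w2 : w1 \in Wee n e -> w2 \in Wee n e -> wmul w1 w2 \in Wee n e.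
Proof.
rewrite !inE; case: (leqP e 1) => he; first by rewrite !sum_le1.
rewrite !modZ0 // !natr_sum => /eqP h1 /eqP h2.
under eq_bigr do rewrite ffunE zmodR // natrD.
rewrite big_split /= h2 add0r.
have -> : \sum_i ((w1.2 (w2.1 i) : nat)%:R : 'Z_e) = \sum_i (w1.2 i : nat)%:R.
  by symmetry; rewrite (reindex_inj (@perm_inj _ w2.1)).
by rewrite h1.
Qed.

Lemma wmul_inj w : injective (wmul w).
Proof.
move=> [s a] [s' a'] [] /mulIg hs; subst s' => ha.
congr (_, _); apply/ffunP => i; move/ffunP/(_ i): ha; rewrite !ffunE.
move=> /(congr1 val) /= /eqP; rewrite eqn_modDr !modn_small // => /eqP.
exact: val_inj.
Qed.

Definition wone (he : (0 < e)%N) : welt := (1%g, [ffun _ => Ordinal he]).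

Lemma act_edge1 he (x : edge n e) : act_edge (wone he) x = x.
Proof. by apply: act_edge_id => // i; rewrite ffunE. Qed.

Lemma Wee1 he : wone he \in Wee n e.
Proof. by rewrite inE big1 ?mod0n // => i _; rewrite ffunE. Qed.

Lemma wmul_Wee w : w \in Wee n e -> wmul w @: Wee n e = Wee n e.
Proof.
move=> hw; apply/eqP; rewrite eqEcard card_imset; last exact: wmul_inj.
rewrite leqnn andbT; apply/subsetP => _ /imsetP[u hu ->].
exact: Wee_mul.
Qed.

Lemma wmul_surj w w' : w \in Wee n e -> w' \in Wee n e ->
  exists2 u, u \in Wee n e & w' = wmul w u.
Proof.
move=> hw hw'; have : w' \in wmul w @: Wee n e by rewrite wmul_Wee.
by case/imsetP => u hu ->; exists u.
Qed.

Lemma imset_actM w1 w2 (S : {set edge n e}) :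
  act_edge (wmul w1 w2) @: S = act_edge w1 @: (act_edge w2 @: S).
Proof. by rewrite -imset_comp; apply: eq_imset => x; rewrite act_edgeM. Qed.

End Group.

Section Ext.
Variables n e : nat.
Implicit Types (w : welt n e) (S T D : {set edge n e}) (v : Lam n e).

Definition sg w S : rat := (-1) ^+ inversions (map (act_edge w) (sorted_edges S)).

Lemma sorted_edges_uniq S : uniq (sorted_edges S).
Proof. by rewrite sort_uniq enum_uniq. Qed.

Lemma mem_sorted_edges S x : (x \in sorted_edges S) = (x \in S).
Proof. by rewrite mem_sort mem_enum. Qed.

Lemma inv_sorted_edges S : inversions (sorted_edges S) = 0%N.
Proof.
apply: inv_sorted; last exact: sorted_edges_uniq.
exact: sort_sorted (@edge_le_total n e) _.
Qed.

Lemma wedge_act w S :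
  wedge_seq (map (act_edge w) (sorted_edges S)) = sg w S *: ebasis (act_edge w @: S).
Proof.
rewrite /wedge_seq map_inj_uniq ?sorted_edges_uniq //; last exact: act_edge_inj.
congr (_ *: ebasis _); apply/setP => x; rewrite inE.
apply/mapP/imsetP => [[y]|[y]]; rewrite ?mem_sorted_edges => hy ->; exists y => //.
by rewrite mem_sorted_edges.
Qed.

Lemma omegaE S : omega S = ebasis S.
Proof.
rewrite /omega /wedge_seq sorted_edges_uniq inv_sorted_edges expr0 scale1r.
by congr ebasis; apply/setP => x; rewrite inE mem_sorted_edges.
Qed.

Lemma actLE w v : actL w v = \sum_S (v S * sg w S) *: ebasis (act_edge w @: S).
Proof. by apply: eq_bigr => S _; rewrite wedge_act scalerA. Qed.

Lemma scaleoE (a b : rat) : a *: (b : rat^o) = a * b.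
Proof. by []. Qed.

Lemma ebasisE S T : ebasis S T = (T == S)%:R.
Proof. by rewrite ffunE. Qed.

Lemma imset_act_inj w : injective (fun S => act_edge w @: S).
Proof. exact: imset_inj (@act_edge_inj n e w). Qed.

Lemma actL_at w v S : actL w v (act_edge w @: S) = sg w S * v S.
Proof.
rewrite actLE sum_ffunE (bigD1 S) //= big1 ?addr0.
  by rewrite ffunE ebasisE eqxx scaleoE mulr1 mulrC.
move=> S' hS'; rewrite ffunE ebasisE.
have -> : (act_edge w @: S == act_edge w @: S') = false.
  by apply/negbTE; apply: contra hS' => /eqP/imset_act_inj ->.
by rewrite scaleoE mulr0.
Qed.

Lemma actL_ebasis w S : actL w (ebasis S) = sg w S *: ebasis (act_edge w @: S).
Proof.
rewrite actLE (bigD1 S) //= big1 ?addr0; first by rewrite ebasisE eqxx mul1r.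
by move=> S' hS'; rewrite ebasisE (negbTE hS') mul0r scale0r.
Qed.

Lemma actLD w : {morph actL w : x y / x + y}.
Proof.
move=> x y; rewrite /actL -big_split /=; apply: eq_bigr => S _.
by rewrite ffunE scalerDl.
Qed.

Lemma actL0 w : actL w 0 = 0.
Proof. by rewrite /actL big1 // => S _; rewrite ffunE scale0r. Qed.

Lemma actLZ w (a : rat) v : actL w (a *: v) = a *: actL w v.
Proof.
rewrite /actL scaler_sumr; apply: eq_bigr => S _.
by rewrite ffunE scalerA.
Qed.

Lemma actL_sum w (I : Type) (r : seq I) (P : pred I) (F : I -> Lam n e) :
  actL w (\sum_(i <- r | P i) F i) = \sum_(i <- r | P i) actL w (F i).
Proof. exact: (big_morph _ (actLD w) (actL0 w)). Qed.

Lemma sg_mul w w' S : sg (wmul w w') S = sg w' S * sg w (act_edge w' @: S).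
Proof.
rewrite /sg.
suff H : odd (inversions (map (act_edge (wmul w w')) (sorted_edges S))) =
  odd (inversions (map (act_edge w') (sorted_edges S))) (+)
  odd (inversions (map (act_edge w) (sorted_edges (act_edge w' @: S)))).
  by rewrite -signr_odd H signr_addb !signr_odd.
have -> : map (act_edge (wmul w w')) (sorted_edges S) =
          map (act_edge w) (map (act_edge w') (sorted_edges S)).
  by rewrite -map_comp; apply: eq_map => x; rewrite act_edgeM.
apply: inv_parity; first exact: act_edge_inj.
- by rewrite map_inj_uniq ?sorted_edges_uniq //; exact: act_edge_inj.
- apply: uniq_perm; rewrite ?sorted_edges_uniq //.
    by rewrite map_inj_uniq ?sorted_edges_uniq //; exact: act_edge_inj.
  move=> x; rewrite mem_sorted_edges; apply/mapP/imsetP => [[y]|[y]];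
  by rewrite ?mem_sorted_edges => hy ->; exists y; rewrite ?mem_sorted_edges.
- exact: inv_sorted_edges.
Qed.

Lemma actL_comp w w' S :
  actL w (actL w' (ebasis S)) = actL (wmul w w') (ebasis S).
Proof.
rewrite !actL_ebasis actLZ actL_ebasis scalerA imset_actM sg_mul.
by rewrite mulrC.
Qed.

Lemma cls_ebasis D : cls D = \sum_(w in Wee n e) sg w D *: ebasis (act_edge w @: D).
Proof. by apply: eq_bigr => w _; rewrite omegaE actL_ebasis. Qed.

Lemma cls_at D T : cls D T = \sum_(w in Wee n e | act_edge w @: D == T) sg w D.
Proof.
rewrite cls_ebasis sum_ffunE big_mkcondr /=; apply: eq_bigr => w _.
rewrite ffunE ebasisE eq_sym scaleoE; case: eqP => _; by rewrite ?mulr1 ?mulr0.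
Qed.

Lemma cls_inv D w : w \in Wee n e -> actL w (cls D) = cls D.
Proof.
move=> hw; rewrite /cls actL_sum.
under eq_bigr do rewrite omegaE actL_comp.
rewrite -[in RHS](wmul_Wee hw) big_imset /=; first by under [RHS]eq_bigr do rewrite omegaE.
by move=> x y _ _; apply: wmul_inj.
Qed.

End Ext.

Section Orbit.
Variables n e : nat.
Implicit Types (w : welt n e) (S T D : {set edge n e}) (v : Lam n e).

Lemma imset1 (he : (0 < e)%N) S : act_edge (wone n he) @: S = S.
Proof.
apply/setP => x; apply/imsetP/idP => [[y hy ->]|hx]; first by rewrite act_edge1.
by exists x; rewrite ?act_edge1.
Qed.

Lemma same_orbitP D D' :
  reflect (exists2 w, w \in Wee n e & act_edge w @: D = D') (same_orbit D D').
Proof.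
apply: (iffP existsP) => [[w /andP[hw /eqP h]]|[w hw h]]; first by exists w.
by exists w; rewrite hw h eqxx.
Qed.

Lemma same_orbit_sym (he : (0 < e)%N) D D' : same_orbit D D' -> same_orbit D' D.
Proof.
case/same_orbitP => w hw h.
have [u hu hwu] := wmul_surj hw (Wee1 n he).
apply/same_orbitP; exists u => //.
apply: (imset_act_inj (w := w)); rewrite /= -imset_actM -hwu imset1 h.
by [].
Qed.

Lemma same_orbit_trans D1 D2 D3 :
  same_orbit D1 D2 -> same_orbit D2 D3 -> same_orbit D1 D3.
Proof.
case/same_orbitP => w1 hw1 h1; case/same_orbitP => w2 hw2 h2.
apply/same_orbitP; exists (wmul w2 w1); first exact: Wee_mul.
by rewrite imset_actM h1 h2.
Qed.

Lemma stab_set D T w0 : w0 \in Wee n e -> act_edge w0 @: D = T ->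
  [set w in Wee n e | act_edge w @: D == T] = wmul w0 @: mg_stab D.
Proof.
move=> hw0 h0; apply/setP => w; rewrite inE; apply/andP/imsetP.
  case=> hw /eqP hwD; have [u hu hwu] := wmul_surj hw0 hw; subst w.
  exists u => //; rewrite inE hu /=; apply/eqP.
  by apply: (imset_act_inj (w := w0)); rewrite /= -imset_actM hwD h0.
case=> u; rewrite inE => /andP[hu /eqP huD] ->; split; first exact: Wee_mul.
by rewrite imset_actM huD h0.
Qed.

Lemma sg_stab D w : mg_invariant D -> w \in mg_stab D -> sg w D = 1.
Proof.
move=> /forallP/(_ w)/implyP h hw; have := h hw.
by rewrite /sg -signr_odd => /negbTE ->.
Qed.

Lemma stab_gt0 (he : (0 < e)%N) D : (0 < #|mg_stab D|)%N.
Proof.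
apply/card_gt0P; exists (wone n he); rewrite inE Wee1 /=.
by rewrite imset1.
Qed.

Lemma cls_self D : mg_invariant D -> cls D D = #|mg_stab D|%:R.
Proof.
move=> hD; rewrite cls_at.
rewrite (eq_bigl (fun w => w \in mg_stab D)); last by move=> w /=; rewrite /mg_stab !inE.
rewrite (eq_bigr (fun _ => 1)); last by move=> w hw; apply: sg_stab.
by rewrite sumr_const.
Qed.

Lemma cls_self_neq0 (he : (0 < e)%N) D : mg_invariant D -> cls D D != 0.
Proof.
by move=> hD; rewrite cls_self // Num.Theory.pnatr_eq0 -lt0n stab_gt0.
Qed.

Lemma cls_out D T : ~~ same_orbit D T -> cls D T = 0.
Proof.
move=> hso; rewrite cls_at big1 // => w /andP[hw /eqP h].
by case/negP: hso; apply/same_orbitP; exists w.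
Qed.

End Orbit.

Theorem theorem3p13 (e n : nat) (he : (1 <= e)%N) (hn : (1 <= n)%N)
  (R : {set {set edge n e}})
  (hRinv : forall D, D \in R -> mg_invariant D)
  (hRcov : forall D, mg_invariant D -> exists2 D', D' \in R & same_orbit D' D)
  (hRdisj : forall D D', D \in R -> D' \in R -> same_orbit D D' -> D = D') :
  [/\ forall D, D \in R -> cls D != 0,
      forall D, D \in R -> homog #|D| (cls D),
      free [seq cls D | D <- enum R]
    & forall v : Lam n e,
        (forall w, w \in Wee n e -> actL w v = v) <->
        v \in <<[seq cls D | D <- enum R]>>%VS ].
Proof.
split.
- move=> D hD; apply/eqP => h0.
  by have := cls_self_neq0 he (hRinv D hD); rewrite h0 ffunE eqxx.
- move=> D hD S hS; rewrite cls_at big1 // => w /andP[_ /eqP hw].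
  by case: hS; rewrite -hw card_imset //; exact: act_edge_inj.
- apply/freeP => k hk i.
  have nthi (j : 'I_#|R|) :
      (map_tuple (@cls n e) (enum_tuple R))`_j = cls (nth set0 (enum R) j).
    by rewrite /= (nth_map set0) // -cardE.
  have hi : (i < size (enum R))%N by rewrite -cardE.
  set Di := nth set0 (enum R) i.
  have DiR : Di \in R by rewrite -mem_enum mem_nth.
  move/ffunP/(_ Di): hk; rewrite sum_ffunE (bigD1 i) //= big1 ?addr0.
    rewrite ffunE ffunE scaleoE nthi // => /eqP; rewrite mulf_eq0 => /orP[/eqP //|].
    by rewrite (negbTE (cls_self_neq0 he (hRinv _ DiR))).
  move=> j hj; rewrite ffunE scaleoE nthi // cls_out ?mulr0 //.
  apply/negP => so.
  have hj' : (j < size (enum R))%N by rewrite -cardE.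
  have DjR : nth set0 (enum R) j \in R by rewrite -mem_enum mem_nth.
  have := hRdisj _ _ DjR DiR so; move/eqP; rewrite nth_uniq ?enum_uniq //.
  by move=> /eqP/val_inj hji; rewrite hji eqxx in hj.
- move=> v; split.
  + move=> hv.
    have vT w (S : {set edge n e}) : w \in Wee n e -> v (act_edge w @: S) = sg w S * v S.
      by move=> hw; rewrite -{1}(hv w hw) actL_at.
    have key : v = \sum_(D in R) (v D / #|mg_stab D|%:R) *: cls D.
      apply/ffunP => T; rewrite sum_ffunE.
      have term D : ((v D / #|mg_stab D|%:R) *: cls D) T =
                    if same_orbit D T then v T else 0.
        rewrite ffunE scaleoE; case: ifP => hso; last by rewrite cls_out ?hso ?mulr0.
        case/same_orbitP: (hso) => w0 hw0 h0.
        rewrite cls_at mulr_sumr (eq_bigr (fun _ => v T / #|mg_stab D|%:R)); last first.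
          move=> w /andP[hw /eqP hwD]; rewrite -hwD vT //.
          by rewrite mulrAC (mulrC (sg w D)).
        rewrite (eq_bigl (mem [set w in Wee n e | act_edge w @: D == T])); last first.
          by move=> w /=; rewrite !inE.
        rewrite sumr_const (stab_set hw0 h0) card_imset; last exact: wmul_inj.
        rewrite -(mulr_natr (v T / _)) divfK // Num.Theory.pnatr_eq0 -lt0n.
        exact: stab_gt0.
      rewrite (eq_bigr (fun D => if same_orbit D T then v T else 0)); last first.
        by move=> D _; apply: term.
      case: (pickP (fun D => (D \in R) && same_orbit D T)) => [D0 /andP[hD0 so0]|none].
        rewrite (bigD1 D0) //= so0 big1 ?addr0 // => D /andP[hD hne].
        case: ifP => // so; case/eqP: hne; apply: hRdisj => //.
        exact: same_orbit_trans so (same_orbit_sym he so0).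
      rewrite big1 => [|D hD]; last by move: (none D); rewrite hD /= => ->.
      apply/eqP; apply/negPn/negP => hvT.
      have inv : mg_invariant T.
        apply/forallP => w; apply/implyP; rewrite inE => /andP[hw /eqP hwT].
        apply/negP => hodd.
        have := vT w T hw; rewrite hwT /sg -signr_odd hodd expr1 mulN1r => h.
        by case/negP: hvT; apply/eqP; lra.
      have [D' hD' so'] := hRcov T inv.
      by move: (none D'); rewrite hD' so'.
    rewrite key; apply: memv_suml => D hD; apply: memvZ; apply: memv_span.
    by apply/mapP; exists D; rewrite ?mem_enum.
  + move=> hv w hw; have hv' := coord_span hv; rewrite hv' actL_sum.
    apply: eq_bigr => i _; rewrite actLZ; congr (_ *: _).
    have : (map_tuple (@cls n e) (enum_tuple R))`_i \in [seq cls D | D <- enum R].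
      by apply: mem_nth; rewrite size_map -cardE.
    by case/mapP => D _ ->; exact: cls_inv.
Qed.
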